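(* (i) There is a function $\delta:\mathbb{N}\to[0,\infty)$ with $\delta(n)\to 0$ as $n\to\infty$ such that for every positive integer $n$ for which a Hadamard matrix of order $n+1$ exists, there exists a real orthogonal $n\times n$ matrix $M=(m_{i,j})$ with $(1-\delta(n))\frac{1}{\sqrt{n}}\le |m_{i,j}|\le (1+\delta(n))\frac{1}{\sqrt{n}}$ for all $i,j$ (i.e. all entries have modulus $(1+o(1))\frac{1}{\sqrt{n}}$). In particular, this is the case if $n=p^r$ where $p$ is a prime with $p\equiv 3 \pmod 4$ and $r$ is odd. (ii) If $n$ is a prime with $n\equiv 3\pmod 4$, then the matrix $M$ in (i) can be chosen to be circulant.
   Context: A Hadamard matrix of order $N$ is an $N\times N$ matrix with entries in $\{+1,-1\}$ whose rows are pairwise orthogonal. A matrix $M=(m_{i,j})_{i,j\in\mathbb{Z}_n}$ is circulant if $m_{i,j}$ depends only on $j-i \bmod n$. *)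

(* Defs.v *)
From HB Require Import structures.
From mathcomp Require Import all_boot all_order all_algebra.
From mathcomp Require Import all_classical all_reals all_analysis.
Set Implicit Arguments. Unset Strict Implicit. Unset Printing Implicit Defensive.
Import Order.TTheory GRing.Theory Num.Theory.
Local Open Scope ring_scope.

Definition is_hadamard (N : nat) (H : 'M[int]_N) : Prop :=
  (forall i j, H i j = 1 \/ H i j = -1) /\
  (forall i i' : 'I_N, i != i' -> \sum_(k < N) H i k * H i' k = 0).

Definition hadamard_exists (N : nat) : Prop := exists H : 'M[int]_N, is_hadamard H.

Definition orthogonal_mx (R : realType) (n : nat) (M : 'M[R]_n) : Prop :=
  M *m M^T = 1%:M.

Definition circulant (R : realType) (n : nat) (M : 'M[R]_n) : Prop :=
  forall i j i' j' : 'I_n, ((j + n - i) %% n = (j' + n - i') %% n)%N ->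
    M i j = M i' j'.

Definition entries_near (R : realType) (n : nat) (d : R) (M : 'M[R]_n) : Prop :=
  forall i j, (1 - d) / Num.sqrt (n%:R) <= `|M i j| /\
              `|M i j| <= (1 + d) / Num.sqrt (n%:R).

(* Main.v *)
Require Import Defs.
From HB Require Import structures.
From mathcomp Require Import all_boot all_order all_algebra all_field.
From mathcomp Require Import all_classical all_reals all_analysis.
From mathcomp Require Import ring lra zify.
Set Implicit Arguments. Unset Strict Implicit. Unset Printing Implicit Defensive.
Import Order.TTheory GRing.Theory Num.Theory.
Import numFieldNormedType.Exports.
Local Open Scope classical_set_scope.
Local Open Scope ring_scope.
Section Core.
Variable R : realType.

Definition dlt (n : nat) : R := 2 / (Num.sqrt (n.+1%:R) - 1).
Definition ca (n : nat) : R := 1 / Num.sqrt (n.+1%:R).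
Definition cb (n : nat) : R := 1 / (Num.sqrt (n.+1%:R) * (Num.sqrt (n.+1%:R) - 1)).

Lemma core_mx (n : nat) (C : 'I_n -> 'I_n -> R) : (0 < n)%N ->
  (forall i j, C i j = 1 \/ C i j = -1) ->
  (forall i, \sum_k C i k = -1) ->
  (forall i i', \sum_k C i k * C i' k = (i == i')%:R * n.+1%:R - 1) ->
  let M := \matrix_(i, j) (ca n * C i j + cb n) in
  M *m M^T = 1%:M /\
  (forall i j, (1 - dlt n) / Num.sqrt (n%:R) <= `|M i j| /\
              `|M i j| <= (1 + dlt n) / Num.sqrt (n%:R)).
Proof.
move=> n0 hC hrow horth M.
set s := Num.sqrt (n.+1%:R : R).
set t := Num.sqrt (n%:R : R).
have hs2 : s ^+ 2 = n.+1%:R by rewrite sqr_sqrtr // ler0n.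
have ht2 : t ^+ 2 = n%:R by rewrite sqr_sqrtr // ler0n.
have t0 : 0 < t by rewrite sqrtr_gt0 ltr0n.
have s0 : 0 <= s by rewrite sqrtr_ge0.
have hst : s ^+ 2 = t ^+ 2 + 1 by rewrite hs2 ht2 -natr1.
have s1 : 1 < s by nra.
have s10 : s - 1 != 0 by rewrite subr_eq0 gt_eqF.
have sn0 : s != 0 by rewrite gt_eqF // (lt_trans ltr01).
split.
  apply/matrixP => i i'; rewrite !mxE.
  under eq_bigr => k _ do rewrite !mxE.
  have -> : \sum_k (ca n * C i k + cb n) * (ca n * C i' k + cb n) =
     ca n ^+ 2 * (\sum_k C i k * C i' k) + ca n * cb n * (\sum_k C i k)
      + ca n * cb n * (\sum_k C i' k) + \sum_(k < n) cb n ^+ 2.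
    rewrite !mulr_sumr -!big_split /=; apply: eq_bigr => k _; ring.
  rewrite horth !hrow sumr_const card_ord.
  have hn : n%:R = s ^+ 2 - 1 :> R by rewrite hs2 -natr1 addrK.
  rewrite /ca /cb -/s -[_ *+ n]mulr_natr hn -hs2.
  case: (i == i'); rewrite /= ?mul1r ?mul0r; field; by rewrite ?sn0 ?s10.
move=> i j; rewrite /M mxE /dlt /ca /cb -/s -/t.
have hab : 1 / s + 1 / (s * (s - 1)) = 1 / (s - 1) by field; rewrite sn0 s10.
have hlo : (1 - 2 / (s - 1)) / t <= 1 / s - 1 / (s * (s - 1)).
  rewrite ler_pdivrMr //.
  have -> : (1 / s - 1 / (s * (s - 1))) * t = (t * (s - 2)) / (s * (s - 1)) by field; rewrite sn0 s10.
  have -> : 1 - 2 / (s - 1) = (s - 3) / (s - 1) by field.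
  rewrite ler_pdivlMr ?mulr_gt0 ?subr_gt0 // ?(lt_trans ltr01) //.
  have -> : (s - 3) / (s - 1) * (s * (s - 1)) = s * (s - 3) by field.
  nra.
have hup : 1 / (s - 1) <= (1 + 2 / (s - 1)) / t.
  rewrite ler_pdivlMr //.
  have -> : 1 + 2 / (s - 1) = (s + 1) / (s - 1) by field.
  rewrite mulrC mulrA ler_pM2r ?invr_gt0 ?subr_gt0 // mulr1; nra.
have a0 : 0 <= 1 / s by rewrite divr_ge0.
have b0 : 0 <= 1 / (s * (s - 1)) by rewrite divr_ge0 // mulr_ge0 // subr_ge0 ltW.
case: (hC i j) => ->.
  rewrite mulr1 ger0_norm ?addr_ge0 // hab; split => //.
  by apply: le_trans hlo _; rewrite -hab lerD2l (le_trans _ b0) // lerNl oppr0.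
rewrite mulrN1; split.
  apply: le_trans hlo _; rewrite addrC -normrN opprD opprK addrC; exact: ler_norm.
apply: le_trans hup; rewrite -hab addrC (le_trans (ler_normD _ _)) //.
by rewrite normrN !ger0_norm // addrC.
Qed.


Lemma dlt_ge0 n : 0 <= dlt n.
Proof.
rewrite /dlt divr_ge0 // subr_ge0.
have s0 : 0 <= Num.sqrt (n.+1%:R : R) by rewrite sqrtr_ge0.
have hs2 : Num.sqrt (n.+1%:R : R) ^+ 2 = n.+1%:R by rewrite sqr_sqrtr // ler0n.
have : (1 : R) <= n.+1%:R by rewrite ler1n.
nra.
Qed.

Lemma dlt_cvg : dlt @ \oo --> (0 : R).
Proof.
apply/cvgrPdist_lt => e e0.
near=> n.
rewrite sub0r normrN ger0_norm ?dlt_ge0 // /dlt.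
have s0 : 0 <= Num.sqrt (n.+1%:R : R) by rewrite sqrtr_ge0.
have hs2 : Num.sqrt (n.+1%:R : R) ^+ 2 = n.+1%:R by rewrite sqr_sqrtr // ler0n.
have hn : (1 + 2 / e) ^+ 2 <= n%:R by near: n; exact: nbhs_infty_ger.
have k0 : 0 < 2 / e by rewrite divr_gt0.
have hlt : 1 + 2 / e < Num.sqrt (n.+1%:R : R).
  move: hn hs2 s0; set K := 1 + 2 / e; set S := Num.sqrt _.
  move=> hn hs2 s0; rewrite ltNge; apply/negP => hle.
  have K0 : 0 <= K by rewrite /K; lra.
  have : S ^+ 2 <= K ^+ 2 by rewrite !expr2; apply: ler_pM.
  rewrite hs2 -natr1; lra.

rewrite ltr_pdivrMr ?subr_gt0 ?(lt_trans _ hlt) ?ltrDl //.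
rewrite -ltr_pdivrMl // mulrC; lra.
Unshelve. all: by end_near.
Qed.

End Core.

Section Paley.
Variable R : realType.
Variable F : finFieldType.
Hypothesis hq : (#|F| %% 4 = 3)%N.
Hypothesis hm1 : (-1 : F) != 1.

Definition hh := (#|F|.-1./2)%N.

Definition chi (x : F) : R := if x == 0 then 0 else if x ^+ hh == 1 then 1 else -1.

Lemma hh_odd : odd hh /\ (hh * 2 = #|F|.-1)%N.
Proof.
have hq' : #|F| = (#|F| %/ 4 * 4 + 3)%N by rewrite {1}(divn_eq #|F| 4) hq.
rewrite /hh hq'; move: (#|F| %/ 4)%N => k.
rewrite (_ : ((k * 4 + 3).-1 = (k * 2 + 1).*2)%N); last by rewrite -mul2n; lia.
rewrite doubleK; split; last by rewrite muln2.
by rewrite addn1 /= oddM /= andbF.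
Qed.

Lemma pm (x : F) : x != 0 -> x ^+ hh = 1 \/ x ^+ hh = -1.
Proof.
move=> x0.
have h1 : x ^+ #|F|.-1 = 1.
  apply: (GRing.mulfI x0); rewrite mulr1 -exprS prednK ?expf_card //.
  by apply/card_gt0P; exists 0.
have : (x ^+ hh) ^+ 2 == 1 by rewrite -exprM muln2 -mul2n mulnC (proj2 hh_odd) h1.
by rewrite sqrf_eq1 => /orP [] /eqP; [left|right].
Qed.

Lemma chiE (x : F) : x != 0 -> (x ^+ hh = 1 /\ chi x = 1) \/ (x ^+ hh = -1 /\ chi x = -1).
Proof.
move=> x0; rewrite /chi (negPf x0).
case: (pm x0) => ->; [left|right]; rewrite ?eqxx //.
by rewrite (negPf hm1).
Qed.

Lemma chiM (x y : F) : chi (x * y) = chi x * chi y.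
Proof.
have [->|x0] := eqVneq x 0; first by rewrite mul0r /chi eqxx mul0r.
have [->|y0] := eqVneq y 0; first by rewrite mulr0 /chi eqxx mulr0.
have xy0 : x * y != 0 by rewrite mulf_neq0.
case: (chiE x0) => -[ex cx]; case: (chiE y0) => -[ey cy];
 rewrite cx cy /chi (negPf xy0) exprMn ex ey ?(mulr1, mul1r, mulrNN) ?eqxx //;
 by rewrite (negPf hm1).
Qed.

Lemma chi0 : chi 0 = 0.
Proof. by rewrite /chi eqxx. Qed.

Lemma chi1 : chi 1 = 1.
Proof. by rewrite /chi oner_eq0 expr1n eqxx. Qed.

Lemma chiN1 : chi (-1) = -1.
Proof.
rewrite /chi oppr_eq0 oner_eq0 -signr_odd (proj1 hh_odd) expr1.
by rewrite (negPf hm1).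
Qed.

Lemma chi_sq (x : F) : x != 0 -> chi x * chi x = 1.
Proof. by move=> x0; case: (chiE x0) => -[_ ->]; rewrite ?mulr1 ?mulrNN ?mulr1. Qed.

Lemma chi_sum : \sum_x chi x = 0.
Proof.
have h : \sum_x chi x = - \sum_x chi x.
  rewrite {1}(reindex_inj (@oppr_inj F)) /= -sumrN.
  by apply: eq_bigr => x _; rewrite -mulN1r chiM chiN1 mulN1r.
have : 2 * \sum_x chi x = 0 by rewrite mulr2n mulrDl mul1r {1}h addNr.
by move/eqP; rewrite mulf_eq0 pnatr_eq0 /= => /eqP.
Qed.

Lemma sum_ind (a : F) (K : R) : \sum_x (x == a)%:R * K = K.
Proof.
rewrite (bigD1 a) //= eqxx mul1r big1 ?addr0 // => x /negPf ->; exact: mul0r.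
Qed.

Lemma jacobsthal (d : F) : d != 0 -> \sum_x chi x * chi (x + d) = -1.
Proof.
move=> d0.
have pw : forall x, chi x * chi (x + d) = chi (1 + d / x) - (x == 0)%:R * 1.
  move=> x; have [->|x0] := eqVneq x 0.
    by rewrite chi0 mul0r invr0 mulr0 addr0 chi1 ?eqxx mul1r subrr.
  rewrite ?(negPf x0) mulr1 subr0 (_ : x + d = x * (1 + d / x)); last by field.
  by rewrite chiM mulrA chi_sq // mul1r.
under eq_bigr do rewrite pw.
rewrite sumrB sum_ind.
have hinj : injective (fun x : F => 1 + d / x).
  move=> x y /= /addrI /(GRing.mulfI d0) /invr_inj //.
have := chi_sum; rewrite (reindex_inj hinj) /= => ->; by rewrite sub0r.
Qed.

Definition cc (z : F) : R := if z == 0 then -1 else chi z.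

Lemma cc_pm (z : F) : cc z = 1 \/ cc z = -1.
Proof.
rewrite /cc; case: eqP => [_|/eqP z0]; first by right.
by case: (chiE z0) => -[_ ->]; [left|right].
Qed.

Lemma cc_sum : \sum_z cc z = -1.
Proof.
have := chi_sum; rewrite (bigD1 0) //= chi0 add0r => h.
rewrite (bigD1 0) //= /cc eqxx -[RHS]addr0; congr (_ + _).
by rewrite -[RHS]h; apply: eq_bigr => z /negPf ->.
Qed.

Lemma cc_sq (z : F) : cc z * cc z = 1.
Proof. by case: (cc_pm z) => ->; rewrite ?mulr1 ?mulrNN ?mulr1. Qed.

Lemma cc_corr0 (d : F) : d != 0 -> \sum_x cc x * cc (x + d) = -1.
Proof.
move=> d0.
have pw : forall x, cc x * cc (x + d) =
   chi x * chi (x + d) - (x == 0)%:R * chi d - (x == - d)%:R * chi (- d).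
  move=> x; rewrite /cc.
  have [->|x0] := eqVneq x 0.
    rewrite add0r (negPf d0) ?eqxx chi0 mul0r eq_sym oppr_eq0 (negPf d0).
    by rewrite mul0r subr0 mul1r sub0r mulN1r.
  have [->|xd] := eqVneq x (- d).
    rewrite addNr ?eqxx chi0 mulr0.
    by rewrite mul0r subr0 mul1r sub0r mulrN1.
  have xd0 : x + d != 0 by rewrite addr_eq0.
  by rewrite ?(negPf x0) (negPf xd0) ?(negPf xd) !mul0r !subr0.
under eq_bigr do rewrite pw.
rewrite !sumrB jacobsthal // !sum_ind (_ : chi (- d) = - chi d); last by rewrite -mulN1r chiM chiN1 mulN1r.
ring.
Qed.

Lemma cc_corr (u v : F) : \sum_y cc (y - u) * cc (y - v) = (u == v)%:R * (#|F|.+1)%:R - 1.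
Proof.
rewrite (reindex_inj (addIr u)) /=.
have e : forall x : F, x + u - v = x + (u - v) by move=> x; ring.
under eq_bigr do rewrite addrK e.
have [->|uv] := eqVneq u v.
  rewrite subrr; under eq_bigr do rewrite addr0 cc_sq.
  by rewrite sumr_const mul1r -natr1 addrK.
by rewrite cc_corr0 ?subr_eq0 // mul0r sub0r.
Qed.

End Paley.

Section Glue.
Variable R : realType.

Definition pmR (x : R) := x = 1 \/ x = -1.

Lemma pmR_mul x y : pmR x -> pmR y -> pmR (x * y).
Proof.
by case=> ->; case=> ->; rewrite /pmR ?(mulr1, mul1r, mulrNN, mulN1r, mulrN1); auto.
Qed.

Lemma pmR_sq x : pmR x -> x * x = 1.
Proof. by case=> ->; rewrite ?mulr1 ?mulrNN ?mulr1. Qed.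

Lemma had_core N (Hr : 'I_N.+1 -> 'I_N.+1 -> R) :
  (forall i j, pmR (Hr i j)) ->
  (forall i i', i != i' -> \sum_k Hr i k * Hr i' k = 0) ->
  let C := fun i j => Hr (lift ord0 i) ord0 * Hr (lift ord0 i) (lift ord0 j)
                      * Hr ord0 (lift ord0 j) * Hr ord0 ord0 in
  (forall i j, C i j = 1 \/ C i j = -1) /\
  (forall i, \sum_k C i k = -1) /\
  (forall i i', \sum_k C i k * C i' k = (i == i')%:R * N.+1%:R - 1).
Proof.
move=> hpm horth C.
pose H' := fun i j => Hr i ord0 * Hr i j * Hr ord0 j * Hr ord0 ord0.
have hC : forall i j, C i j = H' (lift ord0 i) (lift ord0 j) by [].
have H'pm : forall i j, pmR (H' i j).
  by move=> i j; rewrite /H'; do 3 apply: pmR_mul => //.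
have H'0 : forall k, H' ord0 k = 1.
  move=> k; rewrite /H' (_ : forall a b : R, a * b * b * a = (a * a) * (b * b)); last by move=> a b; ring.
  by rewrite !(pmR_sq (hpm _ _)) ?mulr1.
have H'0' : forall k, H' k ord0 = 1.
  move=> k; rewrite /H' (_ : forall a b : R, a * a * b * b = (a * a) * (b * b)); last by move=> a b; ring.
  by rewrite !(pmR_sq (hpm _ _)) ?mulr1.
have horth' : forall u u', \sum_k H' u k * H' u' k = (u == u')%:R * N.+1%:R.
  move=> u u'.
  have pw : forall k, H' u k * H' u' k =
     (Hr u ord0 * Hr u' ord0) * (Hr u k * Hr u' k) * (Hr ord0 k * Hr ord0 k) * (Hr ord0 ord0 * Hr ord0 ord0).
    by move=> k; rewrite /H'; ring.
  under eq_bigr do rewrite pw !(pmR_sq (hpm _ _)) !mulr1.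
  rewrite -mulr_sumr.
  have [<-|uu] := eqVneq u u'.
    under eq_bigr do rewrite pmR_sq //.
    by rewrite pmR_sq // mul1r sumr_const card_ord mul1r.
  by rewrite horth // mulr0 mul0r.
split; first by move=> i j; rewrite hC; exact: H'pm.
split.
  move=> i; have := horth' (lift ord0 i) ord0.
  rewrite eq_sym (negPf (neq_lift _ _)) mul0r.
  under eq_bigr do rewrite H'0 mulr1.
  rewrite big_ord_recl H'0' => /eqP; rewrite addrC addr_eq0 => /eqP <-.
  by apply: eq_bigr => k _; rewrite hC.
move=> i i'; have := horth' (lift ord0 i) (lift ord0 i').
rewrite big_ord_recl !H'0' mulr1 (inj_eq lift_inj) => <-; rewrite (addrC 1) addrK.
by apply: eq_bigr => k _; rewrite !hC.
Qed.

Lemma paley_mx (F : finFieldType) n (g : 'I_n -> F) :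
  (#|F| %% 4 = 3)%N -> (-1 : F) != 1 -> #|F| = n -> bijective g ->
  let C := fun i j => cc R (g j - g i) in
  (forall i j, C i j = 1 \/ C i j = -1) /\
  (forall i, \sum_k C i k = -1) /\
  (forall i i', \sum_k C i k * C i' k = (i == i')%:R * n.+1%:R - 1).
Proof.
move=> hq hm1 hc gb C.
have rg : forall G : F -> R, \sum_y G y = \sum_k G (g k).
  by move=> G; rewrite (reindex g) //; exact: onW_bij.
split; first by move=> i j; exact: cc_pm.
split.
  move=> i; rewrite /C -(rg (fun y => cc R (y - g i))).
  rewrite (reindex_inj (addIr (g i))) /=.
  under eq_bigr do rewrite addrK.
  exact: cc_sum.
move=> i i'; rewrite /C -(rg (fun y => cc R (y - g i) * cc R (y - g i'))).
by rewrite cc_corr // hc (inj_eq (bij_inj gb)).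
Qed.

Lemma m1_neq1 (F : nzRingType) p : prime p -> p \in [pchar F] -> (p %% 4 = 3)%N -> (-1 : F) != 1.
Proof.
move=> pp chp hp; apply/negP => /eqP h.
have : (p %| 2)%N by rewrite (dvdn_pcharf chp) mulr2n -{2}h subrr.
move=> /(dvdn_leq (isT : 0 < 2)%N) => p2.
have := prime_gt1 pp => p1.
have e : p = 2%N by lia.
by move: hp; rewrite e.
Qed.

End Glue.

Theorem proposition3p1 (R : realType) :
  exists delta : nat -> R,
    (forall n, 0 <= delta n) /\
    (delta @ \oo --> (0 : R)) /\
    (* (i) *)
    (forall n : nat, (0 < n)%N -> hadamard_exists n.+1 ->
       exists M : 'M[R]_n, orthogonal_mx M /\ entries_near (delta n) M) /\
    (* (i), in particular *)
    (forall p r : nat, prime p -> (p %% 4 = 3)%N -> odd r ->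
       exists M : 'M[R]_(p ^ r)%N, orthogonal_mx M /\ entries_near (delta (p ^ r)%N) M) /\
    (* (ii) *)
    (forall n : nat, prime n -> (n %% 4 = 3)%N ->
       exists M : 'M[R]_n, orthogonal_mx M /\ entries_near (delta n) M /\ circulant M).
Proof.
exists (@dlt R); split; first exact: dlt_ge0.
split; first exact: dlt_cvg.
split.
  move=> n n0 [H [hpm horth]].
  pose Hr := fun i j => (H i j)%:~R : R.
  have hpmR : forall i j, pmR (Hr i j).
    by move=> i j; rewrite /pmR /Hr; case: (hpm i j) => ->; [left|right].
  have horthR : forall i i', i != i' -> \sum_k Hr i k * Hr i' k = 0.
    move=> i i' ii; have := horth i i' ii => /(congr1 (fun z : int => z%:~R : R)).
    rewrite rmorph_sum /= => h.
    transitivity (\sum_k ((H i k * H i' k)%:~R : R)); last by rewrite h.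
    by apply: eq_bigr => k _; rewrite rmorphM.
  have [c1 [c2 c3]] := had_core hpmR horthR.
  have [ho he] := core_mx n0 c1 c2 c3.
  by eexists; split; [exact: ho | exact: he].
split.
  move=> p r pp hp hr.
  have r0 : (0 < r)%N by case: r hr.
  have [Fm chp cardF] := pPrimePowerField pp r0.
  have hq : (#|Fm| %% 4 = 3)%N.
    rewrite cardF -modnXm hp (_ : r = (r./2).*2.+1); last by rewrite -[in LHS](odd_double_half r) hr add1n.
    by rewrite expnS -mul2n expnM -modnMm -modnXm /= exp1n.
  have hm1 := m1_neq1 pp chp hp.
  pose g := fun i : 'I_(p ^ r) => enum_val (cast_ord (esym cardF) i).
  have gb : bijective g.
    apply: (bij_comp (enum_val_bij _)).
    by exists (cast_ord cardF) => x; rewrite ?cast_ordK ?cast_ordKV.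
  have n0 : (0 < p ^ r)%N by rewrite expn_gt0 prime_gt0.
  have [c1 [c2 c3]] := paley_mx R hq hm1 cardF gb.
  have [ho he] := core_mx n0 c1 c2 c3.
  by eexists; split; [exact: ho | exact: he].
move=> n pn hn.
pose g := fun i : 'I_n => ((i : nat)%:R : 'F_n).
have gi : injective g.
  move=> i j; rewrite /g => /(congr1 (fun x : 'F_n => (x : nat))); rewrite !val_Fp_nat // !modn_small //.
  by move=> h; apply: val_inj.
have gb : bijective g by apply: inj_card_bij => //; rewrite card_Fp ?card_ord.
have hm1 := m1_neq1 pn (pchar_Fp pn) hn.
have n0 : (0 < n)%N by rewrite prime_gt0.
have hq : (#|'F_n| %% 4 = 3)%N by rewrite card_Fp.
have [c1 [c2 c3]] := paley_mx R hq hm1 (card_Fp pn) gb.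
have [ho he] := core_mx n0 c1 c2 c3.
eexists; split; [exact: ho | split; [exact: he|]].
move=> i j i' j' hij; rewrite !mxE; congr (_ * _ + _); congr (cc _ _).
have key : forall a b : 'I_n, g b - g a = ((b + n - a) %% n)%N%:R.
  move=> a b; rewrite Fp_nat_mod // natrB; last by rewrite (leq_trans (ltnW (ltn_ord a))) // leq_addl.
  by rewrite natrD -(Fp_nat_mod pn n) modnn addr0.
by rewrite !key hij.
Qed.
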